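(* Let $X$ be a reflexive complex Banach space, let $A$ be a positive self-adjoint operator from $X$ to $X^\ast$, and let $E$ be a bounded linear operator on $X$ such that $E(\operatorname{dom}A)\subseteq\operatorname{dom}A$ and $E^\ast A\subseteq AE$. Let $\hat E$ denote the bounded operator on $H_A$ obtained by continuous extension of the bounded operator $Ax\mapsto AEx$ on $\operatorname{ran}A$. Then $\hat E$ is a self-adjoint operator on the Hilbert space $H_A$.
   Context: $X^\ast$ denotes the conjugate dual of $X$ (continuous conjugate-linear functionals on $X$); $X$ is identified with $X^{\ast\ast}$. For $v\in X^\ast$, $x\in X$ write $(v,x):=v(x)$ and $(x,v):=\overline{v(x)}$. An operator $A$ from $X$ to $X^\ast$ is positive if $(Ax,x)\ge0$ for all $x\in\operatorname{dom}A$; its adjoint $A^\ast$ has domain $\{y\in X:x\mapsto(Ax,y)\text{ continuous on }\operatorname{dom}A\}$ and is determined by $(x,A^\ast y)=(Ax,y)$; $A$ is self-adjoint if $A=A^\ast$. For a bounded operator $E$ on $X$, $E^\ast$ is the bounded operator on $X^\ast$ with $(E^\ast v,x)=(v,Ex)$. $H_A$ is the completion of $\operatorname{ran}A$ with respect to the inner product $[Ax,Ay]_A:=(Ax,y)$. Under the stated hypotheses, $Ax\mapsto AEx$ is a well-defined bounded linear operator on $\operatorname{ran}A$ with respect to the $H_A$-norm. *)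

(* Defs.v *)
From HB Require Import structures.
From mathcomp Require Import all_boot all_order all_algebra.
From mathcomp Require Import all_classical all_reals all_analysis.
From mathcomp Require Import complex.
Import Order.TTheory GRing.Theory Num.Theory.
Import numFieldTopology.Exports numFieldNormedType.Exports.
Local Open Scope ring_scope.
Local Open Scope classical_set_scope.

Set Implicit Arguments. Unset Strict Implicit. Unset Printing Implicit Defensive.

Definition CC (R : realType) : numClosedFieldType := (R[i] : numClosedFieldType).

Section Defs.
Variable R : realType.
Local Notation C := (CC R).
Variable X : completeNormedModType C.

Definition conj_linear (v : X -> C) : Prop :=
  forall (c : C) (x y : X), v (c *: x + y) = c^* * v x + v y.

(* elements of the conjugate dual X^* : continuous conjugate-linear functionals *)
Definition dual_elt (v : X -> C) : Prop := conj_linear v /\ continuous v.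

Definition dual_norm_le (v : X -> C) (r : C) : Prop :=
  0 <= r /\ forall x : X, `|v x| <= r * `|x|.

(* continuous (= bounded) conjugate-linear functionals on X^*, i.e. elements of X^** *)
Definition bidual_elt (Phi : (X -> C) -> C) : Prop :=
  (forall (c : C) (v w : X -> C), dual_elt v -> dual_elt w ->
      Phi (fun x => c * v x + w x) = c^* * Phi v + Phi w) /\
  (exists M : C, forall (v : X -> C) (r : C), dual_elt v -> dual_norm_le v r ->
      `|Phi v| <= M * r).

(* X is reflexive: the canonical map x |-> (v |-> (x, v) = conj (v x)) from X to X^** is onto *)
Definition reflexive_space : Prop :=
  forall Phi : (X -> C) -> C, bidual_elt Phi ->
    exists x : X, forall v : X -> C, dual_elt v -> Phi v = (v x)^*.

Definition operator_to_dual (D : set X) (A : X -> (X -> C)) : Prop :=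
  D 0 /\
  (forall (c : C) (x y : X), D x -> D y -> D (c *: x + y)) /\
  (forall (c : C) (x y : X), D x -> D y ->
      A (c *: x + y) = (fun z => c * A x z + A y z)) /\
  (forall x : X, D x -> dual_elt (A x)).

Definition positive_op (D : set X) (A : X -> (X -> C)) : Prop :=
  forall x : X, D x -> 0 <= A x x.

(* graph of the adjoint A^* : pairs (y, w) in X x X^* with (x, w) = (Ax, y) for all x in dom A,
   where (x, w) := conj (w x) and (Ax, y) := (A x) y. *)
Definition adjoint_graph (D : set X) (A : X -> (X -> C)) (y : X) (w : X -> C) : Prop :=
  dual_elt w /\ forall x : X, D x -> (w x)^* = A x y.

Definition selfadjoint_op (D : set X) (A : X -> (X -> C)) : Prop :=
  forall (y : X) (w : X -> C), (D y /\ w = A y) <-> adjoint_graph D A y w.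

Definition banach_adjoint (E : X -> X) (v : X -> C) : X -> C := fun x => v (E x).

End Defs.

Section Hilbert.
Variable R : realType.
Local Notation C := (CC R).
Variable H : completeNormedModType C.

Definition inner_product_of_norm (ip : H -> H -> C) : Prop :=
  (forall (a : C) (u v w : H), ip (a *: u + v) w = a * ip u w + ip v w) /\
  (forall u v : H, ip v u = (ip u v)^*) /\
  (forall u : H, ip u u = `|u| ^+ 2).

Definition selfadjoint_bounded (ip : H -> H -> C) (T : H -> H) : Prop :=
  forall u v : H, ip (T u) v = ip u (T v).
End Hilbert.

(* Main.v *)
Require Import Defs.
From HB Require Import structures.
From mathcomp Require Import all_boot all_order all_algebra.
From mathcomp Require Import all_classical all_reals all_analysis.
From mathcomp Require Import complex.
Import Order.TTheory GRing.Theory Num.Theory.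
Import numFieldTopology.Exports numFieldNormedType.Exports.
Local Open Scope ring_scope.
Local Open Scope classical_set_scope.
From mathcomp Require Import ring.

Lemma dense_eq (T : topologicalType) (K : numFieldType) (S : set T) (f g : T -> K) :
  closure S = setT -> continuous f -> continuous g ->
  (forall x, S x -> f x = g x) -> forall x, f x = g x.
Proof.
move=> cS cf cg fg x.
pose h := fun t => f t - g t.
have hc : continuous h by move=> t; apply: continuousB; [exact: cf|exact: cg].
have Zc : closed (h @^-1` [set 0]).
  by apply: preimage_closed; [move=> t _; exact: hc| exact: (accessible_closed_set1 (hausdorff_accessible (@norm_hausdorff K K^o)))].
have : closure S `<=` closure (h @^-1` [set 0]).
  apply: closure_subset => t St /=.
  by rewrite /h fg // subrr.
by rewrite -(proj1 (closure_id _) Zc) cS => /(_ x I) /= /eqP; rewrite subr_eq0 => /eqP.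
Qed.

Section IP.
Variable R : realType.
Variable H : completeNormedModType (CC R).
Variable ip : H -> H -> CC R.
Hypothesis hip : inner_product_of_norm ip.

Lemma ipl a u v w : ip (a *: u + v) w = a * ip u w + ip v w.
Proof. by case: hip => h _; apply: h. Qed.

Lemma ipr a u v w : ip w (a *: u + v) = a^* * ip w u + ip w v.
Proof.
case: hip => _ [hs _].
by rewrite hs ipl rmorphD rmorphM /= -!hs.
Qed.

Lemma ipq c u w : ip (u + c *: w) (u + c *: w) =
  ip u u + c^* * ip u w + c * ip w u + c * c^* * ip w w.
Proof.
rewrite addrC ipl !ipr.
ring.
Qed.

Lemma polar u w : ip u w = 4^-1 *
  (ip (u + 1 *: w) (u + 1 *: w) - ip (u + (-1) *: w) (u + (-1) *: w)
   + 'i * ip (u + 'i *: w) (u + 'i *: w) - 'i * ip (u + (-'i) *: w) (u + (-'i) *: w)).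
Proof.
have cN : (-'i : CC R)^* = 'i by rewrite -conjCi conjCK.
rewrite !ipq rmorph1 rmorphN1 cN conjCi.
set a := ip u u; set b := ip u w; set d := ip w u; set e := ip w w.
transitivity (4^-1 * (2 * b * (1 - 'i ^+ 2) + 2 * d * (1 + 'i ^+ 2))); last first.
  congr (_ * _); ring.
rewrite sqrCi opprK subrr mulr0 addr0.
have four : (4 : CC R) != 0 by rewrite pnatr_eq0.
apply: (mulfI four); rewrite mulrA mulfV // mul1r; ring.
Qed.

Lemma ip_cont w : continuous (fun u => ip u w).
Proof.
have q c : continuous (fun u => ip (u + c *: w) (u + c *: w)).
  have -> : (fun u => ip (u + c *: w) (u + c *: w)) = (fun u => `|u + c *: w| * `|u + c *: w|).
    by apply/funext => u; case: hip => _ [_ ->]; rewrite expr2.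
  pose nf := fun u : H => `|u + c *: w|.
  have hn : continuous nf.
    move=> u; apply: (@continuous_comp _ _ _ (fun u => u + c *: w) (@Num.Def.normr _ H)).
      apply: (@continuousD _ _ _ id (fun=> c *: w)); [exact: cvg_id | exact: cvg_cst].
    exact: norm_continuous.
  move=> u; exact: (continuousM (hn u) (hn u)).
pose g := fun u => 4^-1 *
  (ip (u + 1 *: w) (u + 1 *: w) - ip (u + (-1) *: w) (u + (-1) *: w)
   + 'i * ip (u + 'i *: w) (u + 'i *: w) - 'i * ip (u + (-'i) *: w) (u + (-'i) *: w)).
have -> : (fun u => ip u w) = g by apply/funext => u; apply: polar.
have cm (k : CC R) (f : H -> CC R) : continuous f -> continuous (fun u => k * f u).
  move=> cf u; exact: (continuousM (cvg_cst k) (cf u)).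
have cB (f1 f2 : H -> CC R) : continuous f1 -> continuous f2 -> continuous (fun u => f1 u - f2 u).
  move=> h1 h2 u; exact: (continuousB (h1 u) (h2 u)).
have cD (f1 f2 : H -> CC R) : continuous f1 -> continuous f2 -> continuous (fun u => f1 u + f2 u).
  move=> h1 h2 u; exact: (continuousD (h1 u) (h2 u)).
rewrite /g; apply: (cm).
apply: (cB); [apply: (cD); [apply: (cB)|]|]; (exact: q || exact: (cm _ _ (q _))).
Qed.
End IP.

Theorem lemma5 (R : realType) (X : completeNormedModType (CC R))
  (D : set X) (A : X -> (X -> CC R)) (E : {linear X -> X})
  (H : completeNormedModType (CC R)) (ip : H -> H -> CC R)
  (J : (X -> CC R) -> H) (Ehat : {linear H -> H}) :
  reflexive_space X ->
  operator_to_dual D A -> positive_op D A -> selfadjoint_op D A ->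
  continuous E ->
  (forall x, D x -> D (E x)) ->
  (forall x, D x -> D (E x) /\ banach_adjoint E (A x) = A (E x)) ->
  (* (H, ip) is H_A: a Hilbert space together with an inner-product-preserving
     linear map J of ran A (with [Ax, Ay]_A = (Ax, y)) onto a dense subspace *)
  inner_product_of_norm ip ->
  (forall (c : CC R) (x y : X), D x -> D y ->
      J (A (c *: x + y)) = c *: J (A x) + J (A y)) ->
  (forall x y : X, D x -> D y -> ip (J (A x)) (J (A y)) = A x y) ->
  closure [set J (A x) | x in D] = setT ->
  (* Ehat is the continuous extension of  Ax |-> AEx *)
  continuous Ehat ->
  (forall x, D x -> Ehat (J (A x)) = J (A (E x))) ->
  selfadjoint_bounded ip Ehat.
Proof.
move=> _ _ _ _ _ _ hE hip hJ hipJ dense cEh hEh.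
have hs : forall a b, ip b a = (ip a b)^* by case: hip => _ [].
have S1 : forall u y, D y -> ip (Ehat u) (J (A y)) = ip u (Ehat (J (A y))).
  move=> u0 y Dy.
  apply: (@dense_eq _ _ _ (fun u => ip (Ehat u) (J (A y)))
                   (fun u => ip u (Ehat (J (A y)))) dense).
  - move=> z; exact: (continuous_comp (cEh z) (@ip_cont _ _ ip hip _ (Ehat z))).
  - exact: (@ip_cont _ _ ip hip _).
  - move=> _ [x Dx <-] /=.
    case: (hE x Dx) => DEx HA; case: (hE y Dy) => DEy _.
    rewrite !hEh // !hipJ // -HA.
    by [].
move=> u v.
suff : ip v (Ehat u) = ip (Ehat v) u.
  by move=> h; rewrite (hs v (Ehat u)) (hs (Ehat v) u) h.
move: v; apply: (@dense_eq _ _ _ (fun v => ip v (Ehat u))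
                   (fun v => ip (Ehat v) u) dense).
- exact: (@ip_cont _ _ ip hip _).
- move=> z; exact: (continuous_comp (cEh z) (@ip_cont _ _ ip hip _ (Ehat z))).
- move=> _ [y Dy <-] /=.
  by rewrite hs S1 // -hs.
Qed.
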